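(* Let $G$ be a group with unit $e$, $X$ a set and $(X_g,\alpha_g)_{g\in G}$ a partial action datum of $G$ on $X$. Then the datum is a lax partial action of $G$ on $X$ if and only if the assignment $g\mapsto \alpha'(g)=(X_{g^{-1}},\iota_g,\alpha_g)$ is a lax functor from $G$ (viewed as a bicategory with one $0$-cell, elements of $G$ as $1$-cells, composition given by multiplication, and only identity $2$-cells) to $\mathsf{Par}(X,X)$.
   Context: A partial action datum of $G$ on $X$ is a family of subsets $X_g\subseteq X$ ($g\in G$) together with maps $\alpha_g:X_{g^{-1}}\to X$; $\iota_g:X_{g^{-1}}\to X$ is the inclusion. It is a lax partial action if (LPA1) $X_e=X$ and $\alpha_e=\mathrm{id}_X$; (LPA2) $X_{g^{-1}}\cap\alpha_g^{-1}(X_{h^{-1}})\subseteq X_{(hg)^{-1}}$ for all $g,h$; (LPA3) $\alpha_h\circ\alpha_g=\alpha_{hg}$ on $X_{g^{-1}}\cap\alpha_g^{-1}(X_{h^{-1}})$. $\mathsf{Par}(X,X)$ is the category whose objects are spans $(A,f,a)$ from $X$ to $X$ with $f:A\to X$ injective, whose morphisms $(A,f,a)\to(B,f',b)$ are maps $t:A\to B$ with $f't=f$ and $bt=a$ (so it is a preorder), and whose horizontal composition is composition of spans by pullback: $(B,f',b)\bullet(A,f,a)$ has apex $\{x\in A: a(x)\in f'(B)\}$ with the evident legs. Since $\mathsf{Par}(X,X)$ is locally a preorder, a lax functor $F$ from $G$ to it amounts to $1$-cells $F(g)$ together with the existence of $2$-cells $(X,\mathrm{id}_X,\mathrm{id}_X)\Rightarrow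 F(e)$ and $F(h)\bullet F(g)\Rightarrow F(hg)$ for all $g,h\in G$. *)

(* Defs.v *)
Set Implicit Arguments.


Definition is_group (G : Type) (mul : G -> G -> G) (e : G) (inv : G -> G) : Prop :=
  (forall a b c, mul a (mul b c) = mul (mul a b) c) /\
  (forall a, mul e a = a) /\ (forall a, mul a e = a) /\
  (forall a, mul (inv a) a = e) /\ (forall a, mul a (inv a) = e).

(** A partial action datum: subsets Xs g (= X_g) and maps
    alpha g : X_{g^{-1}} -> X. *)

Definition lax_partial_action (G X : Type) (mul : G -> G -> G) (e : G) (inv : G -> G)
  (Xs : G -> X -> Prop) (alpha : forall g : G, {x : X | Xs (inv g) x} -> X) : Prop :=
  ((forall x, Xs e x) /\
   (forall x (hx : Xs (inv e) x), alpha e (exist _ x hx) = x)) /\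
  (forall g h x (hx : Xs (inv g) x),
      Xs (inv h) (alpha g (exist _ x hx)) -> Xs (inv (mul h g)) x) /\
  (forall g h x (hx : Xs (inv g) x) (hy : Xs (inv h) (alpha g (exist _ x hx)))
      (hz : Xs (inv (mul h g)) x),
      alpha h (exist _ (alpha g (exist _ x hx)) hy) = alpha (mul h g) (exist _ x hz)).

Record span (X : Type) : Type := Span {
  apex : Type;
  lleg : apex -> X;
  rleg : apex -> X
}.
Arguments Span {X} apex lleg rleg.

Definition par_obj (X : Type) (S : span X) : Prop :=
  forall u v : apex S, lleg S u = lleg S v -> u = v.

(** 2-cells S => T in Par(X,X) (a preorder: only existence matters). *)
Definition par_cell (X : Type) (S T : span X) : Prop :=
  exists t : apex S -> apex T,
    (forall u, lleg T (t u) = lleg S u) /\ (forall u, rleg T (t u) = rleg S u).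

Definition id_span (X : Type) : span X := Span X (fun x => x) (fun x => x).

(** Horizontal composition T • S (S first, then T), by pullback. *)
Definition span_comp (X : Type) (T S : span X) : span X :=
  Span {p : apex S * apex T | rleg S (fst p) = lleg T (snd p)}
       (fun p => lleg S (fst (proj1_sig p)))
       (fun p => rleg T (snd (proj1_sig p))).

Definition lax_functor_to_Par (G X : Type) (mul : G -> G -> G) (e : G)
  (F : G -> span X) : Prop :=
  (forall g, par_obj (F g)) /\
  par_cell (id_span X) (F e) /\
  (forall g h, par_cell (span_comp (F h) (F g)) (F (mul h g))).

Definition alpha' (G X : Type) (inv : G -> G) (Xs : G -> X -> Prop)
  (alpha : forall g : G, {x : X | Xs (inv g) x} -> X) (g : G) : span X :=
  Span {x : X | Xs (inv g) x} (fun u => proj1_sig u) (alpha g).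

(* Main.v *)
Require Import Defs.
From Stdlib Require Import ProofIrrelevance.

Lemma inv_e (G : Type) (mul : G -> G -> G) (e : G) (inv : G -> G)
  (HG : @is_group G mul e inv) : inv e = e.
Proof.
  destruct HG as [_ [_ [He [Hi _]]]].
  rewrite <- (He (inv e)). apply Hi.
Qed.

Theorem mainTheorem2 (G X : Type) (mul : G -> G -> G) (e : G) (inv : G -> G)
  (HG : @is_group G mul e inv)
  (Xs : G -> X -> Prop) (alpha : forall g : G, {x : X | Xs (inv g) x} -> X) :
  @lax_partial_action G X mul e inv Xs alpha <->
  @lax_functor_to_Par G X mul e (@alpha' G X inv Xs alpha).
Proof.
  pose proof (@inv_e G mul e inv HG) as Hie.
  split.
  - intros [[H1a H1b] [H2 H3]]. split; [|split].
    + intros g [u hu] [v hv]. simpl. intros ->.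
      f_equal. apply proof_irrelevance.
    + assert (hx : forall x, Xs (inv e) x) by (intro x; rewrite Hie; apply H1a).
      exists (fun x => exist _ x (hx x)). simpl. split; intros; auto.
    + intros g h. simpl.
      unshelve eexists.
      * intros [[[x hx] [y hy]] Heq]. simpl in Heq. subst y.
        exact (exist _ x (H2 g h x hx hy)).
      * split; intros [[[x hx] [y hy]] Heq]; simpl in *; subst y; simpl.
        -- reflexivity.
        -- symmetry. apply H3.
  - intros [Hobj [[t [Ht1 Ht2]] Hc]]. simpl in *.
    split; [split|split].
    + intro x. rewrite <- Hie. rewrite <- (Ht1 x). apply (proj2_sig (t x)).
    + intros x hx. transitivity (alpha e (t x)); [|apply Ht2].
      f_equal. destruct (t x) as [y hy] eqn:E. pose proof (Ht1 x) as E1.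
      rewrite E in E1. simpl in E1. subst y. f_equal. apply proof_irrelevance.
    + intros g h x hx hy.
      destruct (Hc g h) as [s [Hs1 Hs2]].
      set (p := exist (fun p : {x : X | Xs (inv g) x} * {x : X | Xs (inv h) x} =>
                  alpha g (fst p) = proj1_sig (snd p))
                (exist _ x hx, exist _ (alpha g (exist _ x hx)) hy) eq_refl).
      specialize (Hs1 p). simpl in Hs1. rewrite <- Hs1. apply (proj2_sig (s p)).
    + intros g h x hx hy hz.
      destruct (Hc g h) as [s [Hs1 Hs2]].
      set (p := exist (fun p : {x : X | Xs (inv g) x} * {x : X | Xs (inv h) x} =>
                  alpha g (fst p) = proj1_sig (snd p))
                (exist _ x hx, exist _ (alpha g (exist _ x hx)) hy) eq_refl).
      specialize (Hs1 p). specialize (Hs2 p). simpl in Hs1, Hs2.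
      rewrite <- Hs2. f_equal.
      destruct (s p) as [y hy'] eqn:E. simpl in Hs1. subst y.
      f_equal. apply proof_irrelevance.
Qed.
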